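(* Fix a prime $p$ and let $\mathbb{L}_p(r)=|r|+\|r\|_p$ on $\mathbb{Z}[\tfrac1p]$. Then $\mathbb{Z}[\tfrac1p]$ has the property of bounded $p$-dilation with respect to $\mathbb{L}_p$. In particular, $\mathbb{L}_p$ is of bounded doubling with constant $C_{\mathbb{L}_p}=4p^8$, i.e. $|B_{\mathbb{L}_p}(2R)|\le 4p^8\,|B_{\mathbb{L}_p}(R)|$ for all $R\ge 1$.
   Context: $\mathbb{Z}[\tfrac1p]=\{a/p^k: a\in\mathbb{Z},k\in\mathbb{N}\}$ as an additive discrete group; $|r|$ is the absolute value and $\|\cdot\|_p$ is the $p$-adic norm ($\|0\|_p=0$, $\|r\|_p=p^{-n}$ if $r=ap^n/b$ with $a,b$ coprime to $p$ and to each other). For a length function $\mathbb{L}$ on a discrete group $\Gamma$, $B_{\mathbb{L}}(R)=\{\gamma:\mathbb{L}(\gamma)\le R\}$. $\mathbb{L}$ is proper if all $B_{\mathbb{L}}(R)$ are finite. $\Gamma$ has bounded ${\bf t}$-dilation ($\mathbf t>1$) with respect to $\mathbb{L}$ if $\mathbb{L}$ is proper and there is $K<\infty$ with $|B_{\mathbb{L}}(\mathbf tR)|\le K|B_{\mathbb{L}}(R)|$ for all $R\ge1$. $\mathbb{L}$ is of bounded doubling with constant $C$ if $\mathbb{L}$ is proper and $|B_{\mathbb{L}}(2R)|\le C|B_{\mathbb{L}}(R)|$ for all $R\ge1$. *)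

(* Defs.v *)
(* Z[1/p] realized as a subset of rat; radii are real
   (in an arbitrary realType R). *)
From HB Require Import structures.
From mathcomp Require Import all_boot all_order all_algebra.
From mathcomp Require Import reals.
Set Implicit Arguments. Unset Strict Implicit. Unset Printing Implicit Defensive.
Import Order.TTheory GRing.Theory Num.Theory.
Local Open Scope ring_scope.

Definition inZp (p : nat) (r : rat) : Prop :=
  exists (a : int) (k : nat), r = a%:~R / (p%:R ^+ k).

Definition pval (p : nat) (r : rat) : int :=
  (logn p `|numq r|%N)%:Z - (logn p `|denq r|%N)%:Z.

Definition padic_norm (p : nat) (r : rat) : rat :=
  if r == 0 then 0 else (p%:R : rat) ^ (- pval p r).

Definition Lp (p : nat) (r : rat) : rat := `|r| + padic_norm p r.

Definition ball (R : realType) (p : nat) (L : rat -> rat) (rad : R) (r : rat) : Prop :=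
  inZp p r /\ ratr (L r) <= rad.

Definition has_card (P : rat -> Prop) (n : nat) : Prop :=
  exists s : seq rat, [/\ uniq s, (forall x, x \in s <-> P x) & size s = n].

Definition proper_len (R : realType) (p : nat) (L : rat -> rat) : Prop :=
  forall rad : R, exists n, has_card (ball p L rad) n.

Definition bounded_dilation (R : realType) (p : nat) (L : rat -> rat) (t : R) : Prop :=
  proper_len R p L /\
  exists K : R, forall rad : R, 1 <= rad -> forall n m : nat,
    has_card (ball p L (t * rad)) n -> has_card (ball p L rad) m ->
    n%:R <= K * m%:R.

Definition bounded_doubling (R : realType) (p : nat) (L : rat -> rat) (C : R) : Prop :=
  proper_len R p L /\
  forall rad : R, 1 <= rad -> forall n m : nat,
    has_card (ball p L (2 * rad)) n -> has_card (ball p L rad) m ->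
    n%:R <= C * m%:R.

(* Main.v *)
Require Import Defs.
From HB Require Import structures.
From mathcomp Require Import all_boot all_order all_algebra.
From mathcomp Require Import reals zify ring lra.
Import Order.TTheory GRing.Theory Num.Theory.
Local Open Scope ring_scope.

Lemma PX (p n : nat) : (((p ^ n)%N)%:Z)%:~R = ((p%:R : rat) ^+ n).
Proof. by rewrite -natrX. Qed.

Lemma norm_form (p : nat) (a : int) (k : nat) : prime p -> a != 0 ->
  exists u : int, exists e : nat,
    a = u * (p ^ e)%N%:Z /\ coprime p `|u|%N /\
    padic_norm p (a%:~R / (p%:R : rat) ^+ k) = (p%:R : rat) ^+ k / (p%:R) ^+ e.
Proof.
move=> hp a0.
have ha : (0 < `|a|)%N by rewrite absz_gt0.
have [q cpq hq] := pfactor_coprime hp ha.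
set e := logn p `|a| in hq.
have q0 : (0 < q)%N by move: ha; rewrite hq muln_gt0 => /andP[].
set u := (((-1 : int) ^+ (a < 0)%R) * q%:Z)%R.
have hu : `|u|%N = q by rewrite abszM abszX /= exp1n mul1n.
have hau : a = u * (p ^ e)%N%:Z by rewrite -mulrA -PoszM -hq -intEsign.
exists u, e; rewrite hu; split => //; split => //.
have P0 : (p%:R : rat) != 0 by rewrite pnatr_eq0 -lt0n prime_gt0.
have Pu : forall n, (p%:R : rat) ^+ n \is a GRing.unit.
  by move=> n; rewrite unitfE expf_neq0.
have lq : logn p q = 0%N by apply: logn_coprime.
have hr : (a%:~R / (p%:R : rat) ^+ k) != 0.
  by rewrite mulf_neq0 ?intr_eq0 // invr_neq0 // expf_neq0.
rewrite /padic_norm (negbTE hr).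
have ar : (a%:~R : rat) = u%:~R * (p%:R) ^+ e.
  by rewrite hau rmorphM /= -natrX.
have u0 : u != 0 by rewrite -absz_gt0 hu.
case: (leqP e k) => hek.
  have hd : (a%:~R / (p%:R : rat) ^+ k) = u%:~R / ((p ^ (k - e))%N%:Z)%:~R.
    rewrite ar (_ : ((p ^ (k - e))%N%:Z)%:~R = (p%:R : rat) ^+ (k - e)); last first.
      by rewrite -[LHS]/((p ^ (k - e))%N%:R) natrX.
    by rewrite -{1}(subnKC hek) exprD invfM mulrA mulfK // expf_neq0.
  have cp : coprime `|u| `|(p ^ (k - e))%N%:Z|  by rewrite hu absz_nat; apply: coprimeXr; rewrite coprime_sym.
  rewrite hd /pval coprimeq_num // coprimeq_den //.
  have dn0 : ((p ^ (k - e))%N%:Z == 0) = false.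
    by apply/negbTE; rewrite -lt0n expn_gt0 prime_gt0.
  rewrite dn0 /= gtr0_sg ?mul1r; last by rewrite ltz_nat expn_gt0 prime_gt0.
  rewrite hu lq (pfactorK _ hp) sub0r opprK -exprB //.
have hd : (a%:~R / (p%:R : rat) ^+ k) = (u * (p ^ (e - k))%N%:Z)%:~R.
  rewrite ar intrM PX.
  by rewrite -{1}(subnKC (ltnW hek)) addnC exprD mulrA mulfK // expf_neq0.
rewrite hd /pval numq_int denq_int abszM hu absz_nat lognM ?expn_gt0 ?(prime_gt0 hp) //.
rewrite lq (pfactorK _ hp) add0n logn1 subr0 -exprnN.
by rewrite -{2}(subnKC (ltnW hek)) exprD invfM mulrA divff ?mul1r // expf_neq0.
Qed.

Lemma norm_ge0 p r : prime p -> 0 <= padic_norm p r.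
Proof.
move=> hp; rewrite /padic_norm; case: ifP => // _.
by apply: exprz_ge0; rewrite ler0n.
Qed.

Lemma norm_le (p : nat) (a : int) (k : nat) : prime p ->
  padic_norm p (a%:~R / (p%:R : rat) ^+ k) <= (p%:R : rat) ^+ k.
Proof.
move=> hp; have [->|a0] := eqVneq a 0.
  by rewrite mul0r /padic_norm eqxx exprn_ge0 // ler0n.
have [u [e [_ [_ ->]]]] := norm_form p a k hp a0.
have P0 : (0 : rat) < p%:R by rewrite ltr0n prime_gt0.
rewrite ler_pdivrMr ?exprn_gt0 //; apply: ler_peMr; first by rewrite exprn_ge0 // ltW.
by rewrite exprn_ege1 // ler1n prime_gt0.
Qed.

Lemma card_sub (P : rat -> Prop) n s : has_card P n ->
  (forall x, P x -> x \in s) -> (n <= size s)%N.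
Proof.
move=> [s0 [u0 h0 <-]] hs; apply: uniq_leq_size => // x /h0 /hs //.
Qed.

Lemma card_sup (P : rat -> Prop) m s : uniq s ->
  (forall x, x \in s -> P x) -> has_card P m -> (size s <= m)%N.
Proof.
move=> us hs [s0 [u0 h0 <-]]; apply: uniq_leq_size => // x /hs /h0 //.
Qed.

Definition lst (p J N : nat) : seq rat :=
  [seq ((i%:Z - N%:Z)%:~R / (p%:R : rat) ^+ J) | i <- iota 0 (2 * N).+1].

Lemma lst_size p J N : size (lst p J N) = (2 * N).+1.
Proof. by rewrite size_map size_iota. Qed.

Lemma lst_uniq p J N : prime p -> uniq (lst p J N).
Proof.
move=> hp; rewrite map_inj_uniq ?iota_uniq // => i j /=.
have PJ : (p%:R : rat) ^+ J != 0 by rewrite expf_neq0 // pnatr_eq0 -lt0n prime_gt0.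
move/(mulIf (invr_neq0 PJ))/intr_inj => h; lia.
Qed.

Lemma mem_lst p J N (n : int) : (`|n| <= N%:Z)%R ->
  n%:~R / (p%:R : rat) ^+ J \in lst p J N.
Proof.
move=> hn; apply/mapP; exists `|(n + N%:Z)%R|%N.
  rewrite mem_iota add0n ltnS; lia.
congr (_ / _); congr (_%:~R); lia.
Qed.

Lemma lst_form p J N x : x \in lst p J N ->
  exists n : int, (`|n| <= N%:Z)%R /\ x = n%:~R / (p%:R : rat) ^+ J.
Proof.
move=> /mapP [i]; rewrite mem_iota add0n => hi ->.
exists (i%:Z - N%:Z); split => //; lia.
Qed.

Lemma ratrP (R : realType) (p n : nat) : ratr ((p%:R : rat) ^+ n) = (p%:R : R) ^+ n.
Proof. by rewrite rmorphXn /= ratr_nat. Qed.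

Lemma upper (R : realType) (p : nat) (b : R) (J N : nat) r : prime p ->
  b < (p%:R : R) ^+ J.+1 -> b * (p%:R) ^+ J < N.+1%:R ->
  ball p (Lp p) b r -> r \in lst p J N.
Proof.
move=> hp hb hN [[a [k ->]] hL].
have hn := norm_ge0 p (a%:~R / (p%:R : rat) ^+ k) hp.
move: hL; rewrite /Lp rmorphD /= => hL.
have hn' : 0 <= ratr (padic_norm p (a%:~R / (p%:R : rat) ^+ k)) :> R.
  by rewrite -(ler_rat R) rmorph0 in hn.
have ha' : 0 <= ratr `|a%:~R / (p%:R : rat) ^+ k| :> R.
  by rewrite ratr_norm normr_ge0.
have h1 : ratr `|a%:~R / (p%:R : rat) ^+ k| <= b.
  by apply: le_trans hL; rewrite lerDl.
have h2 : ratr (padic_norm p (a%:~R / (p%:R : rat) ^+ k)) <= b.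
  by apply: le_trans hL; rewrite lerDr.
have P0 : (0 : rat) < p%:R by rewrite ltr0n prime_gt0.
have P0' : (0 : R) < p%:R by rewrite ltr0n prime_gt0.
suff [n hr] : exists n : int, a%:~R / (p%:R : rat) ^+ k = n%:~R / (p%:R : rat) ^+ J.
  rewrite hr; apply: mem_lst.
  move: h1; rewrite hr ratr_norm fmorph_div /= ratr_int ratrP.
  rewrite normrM normfV normrX (gtr0_norm P0') ler_pdivrMr ?exprn_gt0 //.
  move=> h; have : `|n|%:~R < (N.+1%:Z)%:~R :> R.
    rewrite intr_norm; apply: le_lt_trans h _; exact: hN.
  by rewrite ltr_int => hh; clear -hh; lia.
have [->|a0] := eqVneq a 0; first by exists 0; rewrite !mul0r.
have [u [e [hau [_ hnorm]]]] := norm_form p a k hp a0.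
move: h2; rewrite hnorm fmorph_div /= !ratrP.
rewrite ler_pdivrMr ?exprn_gt0 // => h2.
have hk : (k < J.+1 + e)%N.
  rewrite -(ltn_exp2l _ _ (prime_gt1 hp)) -(ltr_nat R) !natrX exprD.
  by apply: le_lt_trans h2 _; rewrite ltr_pM2r ?exprn_gt0.
exists (u * (p ^ (J + e - k))%N%:Z).
rewrite hau !intrM !PX.
apply/eqP; rewrite eqr_div ?expf_neq0 ?(gt_eqF P0) // -!mulrA -!exprD subnK; last by clear -hk; lia.
by rewrite addnC.
Qed.

Lemma lower (R : realType) (p : nat) (b : R) (J M : nat) x : prime p ->
  (p%:R : R) ^+ J <= b / 2 -> M%:R <= b / 2 * (p%:R) ^+ J ->
  x \in lst p J M -> ball p (Lp p) b x.
Proof.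
move=> hp hJ hM /lst_form [n [hn ->]]; split; first by exists n, J.
have P0' : (0 : R) < p%:R by rewrite ltr0n prime_gt0.
rewrite /Lp rmorphD /= (splitr b); apply: lerD.
  rewrite ratr_norm fmorph_div /= ratr_int ratrP normrM normfV normrX (gtr0_norm P0').
  rewrite ler_pdivrMr ?exprn_gt0 //; apply: le_trans hM.
  have : `|n|%:~R <= (M%:Z)%:~R :> R by rewrite ler_int.
  by rewrite intr_norm.
apply: le_trans hJ; rewrite -ratrP ler_rat; exact: norm_le.
Qed.

Lemma exK (R : realType) (p : nat) (b : R) : prime p ->
  exists K : nat, b < (p%:R : R) ^+ K.
Proof.
move=> hp; exists (Num.truncn `|b|).+1.
apply: le_lt_trans (ler_norm b) _.
apply: lt_le_trans (truncnS_gt _) _.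
rewrite -natrX ler_nat; apply: ltnW; apply: ltn_expl; exact: prime_gt1.
Qed.

Lemma exJ (R : realType) (p : nat) (b : R) : prime p -> 1 <= b ->
  exists J : nat, (p%:R : R) ^+ J <= b /\ b < (p%:R) ^+ J.+1.
Proof.
move=> hp b1; have [K hK] := exK R p b hp.
elim: K hK => [|k IH] hk.
  by move: (le_lt_trans b1 hk); rewrite expr0 ltxx.
case: (lerP ((p%:R : R) ^+ k) b) => h; first by exists k.
exact: IH.
Qed.

Lemma zero_ball (R : realType) (p : nat) (rad : R) : 0 <= rad -> ball p (Lp p) rad 0.
Proof.
move=> h; split; first by exists 0, 0%N; rewrite mul0r.
by rewrite /Lp /padic_norm eqxx normr0 addr0 rmorph0.
Qed.

Lemma core (R : realType) (p : nat) (t rad : R) (n m : nat) : prime p ->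
  1 <= t -> t <= p%:R -> 1 <= rad ->
  has_card (ball p (Lp p) (t * rad)) n -> has_card (ball p (Lp p) rad) m ->
  n%:R <= 4 * (p%:R : R) ^+ 8 * m%:R.
Proof.
move=> hp t1 tp r1 hn hm.
have p2 : (2 <= p)%N by apply: prime_gt1.
have P2 : (2 : R) <= p%:R by rewrite ler_nat.
have P0 : (0 : R) < p%:R by apply: lt_le_trans P2; lra.
have b1 : 1 <= t * rad by rewrite -[1](mulr1); apply: ler_pM => //; lra.
have [J [hJ1 hJ2]] := exJ R p (t * rad) hp b1.
have PJ0 : (0 : R) < p%:R ^+ J by rewrite exprn_gt0.
set N := Num.truncn (t * rad * p%:R ^+ J).
have hN : N%:R <= t * rad * p%:R ^+ J.
  by rewrite truncn_le mulr_ge0 //; lra.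
have hnN : (n <= (2 * N).+1)%N.
  rewrite -(lst_size p J N); apply: (@card_sub _ n _ hn) => x; exact: (upper R p (t * rad) J N x hp hJ2 (truncnS_gt _)).
suff hnat : (n <= 4 * p ^ 8 * m)%N.
  have : (n%:R : R) <= (4 * p ^ 8 * m)%N%:R by rewrite ler_nat.
  by move=> h; apply: le_trans h _; rewrite -natrX -!natrM.
case: (ltnP J 3) => hJ.
  have m1 : (1 <= m)%N.
    have := card_sup _ _ [:: 0] is_true_true _ hm.
    apply => x; rewrite inE => /eqP ->; apply: zero_ball; lra.
  have hN5 : (N < p ^ 5)%N.
    apply: (@leq_trans (p ^ (J + J.+1))); last first.
      by apply: leq_pexp2l; [exact: ltnW | clear -hJ; lia].
    rewrite -(ltr_nat R) natrX exprD; apply: le_lt_trans hN _.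
    by rewrite mulrC ltr_pM2l.
  have h8 : (p ^ 8 = p ^ 5 * p ^ 3)%N by rewrite -expnD.
  have h3 : (1 <= p ^ 3)%N by rewrite expn_gt0 ltnW.
  rewrite h8; move: hN5 h3; generalize (p ^ 5)%N (p ^ 3)%N => a c ha hc.
  have : (a * 1 <= a * c)%N by rewrite leq_mul2l hc orbT.
  have : (4 * (a * c) * 1 <= 4 * (a * c) * m)%N by rewrite leq_mul2l m1 orbT.
  move=> e1 e2; clear -e1 e2 hnN ha hc; lia.
set J' := (J - 3)%N.
have hJJ : (J = J' + 3)%N by rewrite /J'; clear -hJ; lia.
have PJ'0 : (0 : R) < p%:R ^+ J' by rewrite exprn_gt0.
have hJ' : (p%:R : R) ^+ J' <= rad / 2.
  have h1 : (p%:R : R) ^+ J' * p%:R ^+ 3 <= p%:R * rad.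
    rewrite -exprD -hJJ; apply: le_trans hJ1 _; rewrite ler_wpM2r //; lra.
  have h2 : (p%:R : R) ^+ J' * p%:R ^+ 2 <= rad.
    rewrite -(ler_pM2l P0); apply: le_trans h1; rewrite le_eqVlt; apply/orP; left.
    by apply/eqP; rewrite !exprS expr0; ring.
  have h3 : (2 : R) <= p%:R ^+ 2.
    by rewrite expr2; apply: le_trans P2 _; rewrite ler_peMr //; lra.
  have h4 : (p%:R : R) ^+ J' * 2 <= p%:R ^+ J' * p%:R ^+ 2 by rewrite ler_pM2l.
  lra.
set M := Num.truncn (rad / 2 * p%:R ^+ J').
have hM : M%:R <= rad / 2 * p%:R ^+ J'.
  by rewrite truncn_le mulr_ge0 //; lra.
have hM2 : rad / 2 * p%:R ^+ J' < M.+1%:R by apply: truncnS_gt.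
have hmM : ((2 * M).+1 <= m)%N.
  rewrite -(lst_size p J' M); apply: (card_sup _ _ _ _ _ hm); first exact: lst_uniq.
  move=> x; exact: (lower _ _ _ _ _ _ hp hJ' hM).
have hNM : (N < 2 * p ^ 4 * M.+1)%N.
  rewrite -(ltr_nat R) (natrM _ (2 * p ^ 4)) (natrM _ 2) natrX; apply: le_lt_trans hN _.
  have E : (p%:R : R) * rad * p%:R ^+ (J' + 3) = 2 * p%:R ^+ 4 * (rad / 2 * p%:R ^+ J').
    by rewrite !exprD !exprS expr0; field.
  apply: (@le_lt_trans _ _ (p%:R * rad * p%:R ^+ J)).
    by rewrite ler_wpM2r ?exprn_ge0 ?ler_wpM2r //; lra.
  rewrite hJJ E ltr_pM2l //; apply: mulr_gt0; [lra | exact: exprn_gt0].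
have h8 : (p ^ 8 = p ^ 4 * p ^ 4)%N by rewrite -expnD.
have h4 : (1 <= p ^ 4)%N by rewrite expn_gt0 ltnW.
rewrite h8; move: hNM h4; generalize (p ^ 4)%N => a hNM h4.
have e1 : (1 * (2 * M).+1 <= a * (2 * M).+1)%N by rewrite leq_mul2r h4 orbT.
have e2 : (a * (2 * M).+1 <= a * m)%N by rewrite leq_mul2l hmM orbT.
have e3 : (a * m * 1 <= a * m * a)%N by rewrite leq_mul2l h4 orbT.
have e4 : (a * M.+1 <= a * (2 * M).+1)%N by rewrite leq_mul2l; apply/orP; right; clear; lia.
have e5 : (4 * (a * a) * m = 4 * (a * m * a))%N by rewrite (mulnC (a * m)) !mulnA.
rewrite e5.
clear -e1 e2 e3 e4 hNM hnN; lia.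
Qed.

Lemma proper_Lp (R : realType) (p : nat) : prime p -> proper_len R p (Lp p).
Proof.
move=> hp rad.
have [K hK] := exK R p rad hp.
have hK' : rad < (p%:R : R) ^+ K.+1.
  apply: lt_le_trans hK _; rewrite exprS ler_peMl ?exprn_ge0 ?ler0n //.
  by rewrite ler1n prime_gt0.
set N := Num.truncn (rad * (p%:R : R) ^+ K).
exists (size [seq x <- lst p K N | ratr (Lp p x) <= rad]).
exists [seq x <- lst p K N | ratr (Lp p x) <= rad]; split => //.
  by rewrite filter_uniq // lst_uniq.
move=> x; rewrite mem_filter; split.
  move=> /andP [hxl hx]; split => //.
  by have [n [_ ->]] := lst_form p K N x hx; exists n, K.
move=> hb; rewrite (upper R p rad K N x hp hK' (truncnS_gt _) hb) andbT.
by case: hb.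
Qed.

Theorem lemma3p6 (R : realType) (p : nat) (hp : prime p) :
  bounded_dilation p (Lp p) (p%:R : R) /\
  bounded_doubling p (Lp p) (4 * (p%:R : R) ^+ 8).
Proof.
have p2 : (2 <= p)%N by apply: prime_gt1.
have P2 : (2 : R) <= p%:R by rewrite ler_nat.
split; split; first exact: proper_Lp.
- exists (4 * (p%:R : R) ^+ 8) => rad r1 n m hn hm.
  apply: (core R p (p%:R) rad n m hp) => //; lra.
- exact: proper_Lp.
- move=> rad r1 n m hn hm.
  apply: (core R p 2 rad n m hp) => //; lra.
Qed.
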